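(* Let $a,b$ be positive integers with $\gcd(a,b)=1$, let $r\ge1$, let $n>rab$, and let $\lambda$ be an $(a,b;n)$-balanced partition of $rn$. Let $k$ be an integer with $rab\le k\le n-1$ such that $k=rab+au+bv$ for some nonnegative integers $u,v$, and let $S_k=\{(i,j)\in\lambda: ai+bj\equiv k\pmod n\}$. Then $S_k$ is the disjoint union of two sets $A_k$ and $B_k$ such that: (1) if $(i,j)\in A_k$ then either $i<b$ or $(i-b,j+a)\in A_k$; (2) if $(i,j)\in B_k$ then either $j<a$ or $(i+b,j-a)\in B_k$.
   Context: Partitions are Young diagrams: finite sets $\lambda\subset\mathbb{Z}_{\ge0}^2$ such that $(i,j)\in\lambda$ implies $(i',j')\in\lambda$ for $0\le i'\le i$, $0\le j'\le j$. Box $(i,j)$ has color $ai+bj\bmod n$; $\lambda$ is $(a,b;n)$-balanced if each residue class mod $n$ is the color of exactly $r$ boxes of $\lambda$. *)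

(* Defs.v *)
From mathcomp Require Import all_boot.
From mathcomp Require Import finmap.
Set Implicit Arguments. Unset Strict Implicit. Unset Printing Implicit Defensive.
Local Open Scope fset_scope.

Definition is_partition (lam : {fset (nat * nat)}) : Prop :=
  forall i j i' j', (i, j) \in lam -> i' <= i -> j' <= j -> (i', j') \in lam.

Definition color (a b n : nat) (p : nat * nat) : nat := (a * p.1 + b * p.2) %% n.

Definition balanced (a b n r : nat) (lam : {fset (nat * nat)}) : Prop :=
  forall c, c < n -> #|` [fset p in lam | color a b n p == c] | = r.

Definition Sk (a b n k : nat) (lam : {fset (nat * nat)}) : {fset (nat * nat)} :=
  [fset p in lam | a * p.1 + b * p.2 == k %[mod n]].

(* Main.v *)
Require Import Defs.
From mathcomp Require Import all_boot finmap zify.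
Local Open Scope fset_scope.
Local Open Scope nat_scope.

Lemma inF (T : choiceType) (A : {fset T}) (P : pred T) x :
  (x \in [fset y in A | P y]) = (x \in A) && P x.
Proof. by rewrite inE. Qed.

Section L.
Variables (a b r n k u v : nat) (lam : {fset (nat * nat)}).
Hypotheses (a0 : 0 < a) (b0 : 0 < b) (cop : coprime a b) (r1 : 1 <= r)
  (rn : r * a * b < n) (part : is_partition lam) (bal : balanced a b n r lam)
  (klo : r * a * b <= k) (khi : k <= n - 1) (kuv : k = r * a * b + a * u + b * v).

Lemma kn : k < n. Proof. lia. Qed.

Lemma abn : a * b < n. Proof. nia. Qed.

Lemma inS p : (p \in Sk a b n k lam) = (p \in lam) && ((a * p.1 + b * p.2) %% n == k).
Proof. by rewrite /Sk !inE (modn_small kn). Qed.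

Lemma cardS : #|` Sk a b n k lam| = r.
Proof.
rewrite -(bal _ kn); congr (#|` _|); apply/fsetP => p.
by rewrite inS !inE /color.
Qed.

Lemma domin i j (Hin : forall t, t * a <= j -> (i + t * b, j - t * a) \in lam)
  (ib : i < b) (Hm : (a * i + b * j) %% n = k) x y :
  a * x + b * y = k -> (x, y) \in lam.
Proof.
move=> Hxy.
have ex : exists t, x <= i + t * b by exists x; nia.
case: (ex_minnP ex) => t Ht Hmin.
set d := i + t * b - x.
have db : d < b.
  case: t Ht Hmin @d => [|t] Ht Hmin; first by lia.
  have : ~~ (x <= i + t * b) by apply/negP => /Hmin; lia.
  rewrite mulSn; lia.
have Hd : x + d = i + t * b by rewrite /d; lia.
clearbody d.
have Hkd : k + a * d <= a * i + b * j.
  have := divn_eq (a * i + b * j) n; rewrite Hm => Em.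
  case El: ((a * i + b * j) %/ n) => [|l].
    rewrite El mul0n add0n in Em.
    have bd : b %| a * d.
      have E1 : a * d + b * j = b * y + a * t * b.
        have : a * (i + t * b) = a * x + a * d by rewrite -Hd mulnDr.
        nia.
      have : b %| a * d + b * j.
        rewrite E1; apply: dvdn_add; [exact: dvdn_mulr | exact: dvdn_mull].
      by rewrite dvdn_addl // dvdn_mulr.
    rewrite Gauss_dvdr in bd; last by rewrite coprime_sym.
    have -> : d = 0 by case: d bd db Hd => // d' bd db Hd; have := dvdn_leq (ltn0Sn d') bd; lia.
    lia.
  rewrite El in Em.
  have := abn; have : a * d < a * b by rewrite ltn_pmul2l.
  nia.
have Htj : t * a <= j.
  have : b * (t * a) <= b * j by nia.
  by rewrite leq_pmul2l.
have Hy : y <= j - t * a.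
  have : b * (y + t * a) <= b * j by nia.
  rewrite leq_pmul2l //; lia.
exact: (part _ _ _ _ (Hin t Htj) Ht Hy).
Qed.


Lemma notfull i j : (i, j) \in Sk a b n k lam -> i < b ->
  exists t, t * a <= j /\ (i + t * b, j - t * a) \notin lam.
Proof.
rewrite inS /= => /andP[zl Hm] ib.
case: (boolP [exists t : 'I_j.+1, (t * a <= j) && ((i + t * b, j - t * a) \notin lam)]).
  by move=> /existsP[t /andP[h1 h2]]; exists t.
move=> /existsPn Hall; exfalso.
have Hin : forall t, t * a <= j -> (i + t * b, j - t * a) \in lam.
  move=> t ht; have tj : t < j.+1 by nia.
  by have := Hall (Ordinal tj); rewrite /= ht /= negbK.
pose Q := fun s => (u + s * b, v + (r - s) * a).
have Qk s : s <= r -> a * (u + s * b) + b * (v + (r - s) * a) = k.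
  move=> sr; have : (r - s) * a + s * a = r * a by rewrite -mulnDl subnK.
  nia.
have FS : Q @` [fset x in iota 0 r.+1] `<=` Sk a b n k lam.
  apply/fsubsetP => q /imfsetP[s + ->]; move=> sr.
  have : s \in iota 0 r.+1 by move: sr; rewrite !inE.
  rewrite mem_iota => /andP[_ {}sr].
  have {}sr : s <= r by lia.
  rewrite inS /= Qk // (modn_small kn) eqxx andbT.
  exact: (@domin i j Hin ib (eqP Hm) _ _ (Qk s sr)).
have := fsubset_leq_card FS.
have /eqP -> : #|` Q @` [fset x in iota 0 r.+1]| == #|` [fset x in iota 0 r.+1]|.
  apply/card_in_imfsetP => s1 s2 _ _ [E _].
  apply/eqP; rewrite -(eqn_pmul2r b0); lia.
by rewrite card_fseq undup_id ?iota_uniq // size_iota cardS ltnn.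
Qed.


Lemma modsub X Y : X + a * b = Y -> Y %% n = k -> X %% n = (k - a * b) %% n.
Proof.
move=> EXY HY; have := divn_eq Y n; rewrite HY => EY.
have abk : a * b <= k by nia.
have -> : X = Y %/ n * n + (k - a * b) by lia.
by rewrite modnMDl.
Qed.

Definition Zs := [fset p in Sk a b n k lam | p.1 < b].
Definition Ws := [fset p in Sk a b n k lam | b <= p.1].
Definition Es := [fset p in Sk a b n k lam | (a <= p.2) && ((p.1 + b, p.2 - a) \notin lam)].

Lemma stepI : #|` Es| <= #|` Zs|.
Proof.
pose S' := [fset p in lam | color a b n p == (k - a * b) %% n].
have n0 : 0 < n by lia.
have cS' : #|` S'| = r by rewrite (bal _ (ltn_pmod _ n0)).
have cS : #|` Zs| + #|` Ws| = r.
  rewrite -cardS -cardfsUI.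
  have -> : Zs `&` Ws = fset0.
    apply/fsetP => p; rewrite in_fsetI !inF in_fset0; case: (ltnP p.1 b); rewrite ?andbF //.
  have -> : Zs `|` Ws = Sk a b n k lam.
    apply/fsetP => p; rewrite in_fsetU !inF; case: (ltnP p.1 b); rewrite ?andbT ?andbF ?orbF //.
  by rewrite cardfs0 addn0.
pose al := fun p : nat * nat => (p.1 - b, p.2).
pose be := fun p : nat * nat => (p.1, p.2 - a).
have sub : al @` Ws `|` be @` Es `<=` S'.
  apply/fsubsetP => q; rewrite inE => /orP[] /imfsetP[[x y] + ->];
    rewrite inF inS /= => /andP[/andP[pl Hm] H];
    rewrite inF /color /al /be /=; apply/andP; split.
  - apply: (part _ _ _ _ pl); lia.
  - by apply/eqP; apply: (@modsub _ _ _ (eqP Hm)); nia.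
  - by case/andP: H => H1 H2; apply: (part _ _ _ _ pl); lia.
  - by case/andP: H => H1 H2; apply/eqP; apply: (@modsub _ _ _ (eqP Hm)); nia.
have disj : al @` Ws `&` be @` Es = fset0.
  apply/fsetP => q; rewrite in_fsetI in_fset0; apply/negP => /andP[].
  move=> /imfsetP[[x y] H1 ->] /imfsetP[[x' y'] H2 E].
  move: H1 H2 E; rewrite /Ws /Es /al /be !inF /=.
  move=> /andP[/andP[pl _] H1] /and3P[_ H2 H3] [E1 E2].
  by rewrite -E1 -E2 subnK // pl in H3.
have := fsubset_leq_card sub.
have := cardfsUI (al @` Ws) (be @` Es); rewrite disj cardfs0 addn0 => ->.
have /eqP -> : #|` al @` Ws| == #|` Ws|.
  apply/card_in_imfsetP => [[x y] [x' y']]; rewrite !inF /= => /andP[_ h1] /andP[_ h2] [E1 E2].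
  congr pair; lia.
have /eqP -> : #|` be @` Es| == #|` Es|.
  apply/card_in_imfsetP => [[x y] [x' y']]; rewrite !inF /= => /andP[_ /andP[h1 _]] /andP[_ /andP[h2 _]] [E1 E2].
  congr pair; lia.
lia.
Qed.

Definition LG (p : nat * nat) :=
  [forall t : 'I_p.1.+1, (t * b <= p.1) ==> ((p.1 - t * b, p.2 + t * a) \in lam)].
Definition RG (p : nat * nat) :=
  [forall t : 'I_p.2.+1, (t * a <= p.2) ==> ((p.1 + t * b, p.2 - t * a) \in lam)].

Lemma LGP i j : reflect (forall t, t * b <= i -> (i - t * b, j + t * a) \in lam) (LG (i, j)).
Proof.
apply: (iffP forallP) => /= H t.
  move=> ht; have ti : t < i.+1 by nia.
  by have := H (Ordinal ti); rewrite /= ht.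
by apply/implyP; apply: H.
Qed.

Lemma RGP i j : reflect (forall t, t * a <= j -> (i + t * b, j - t * a) \in lam) (RG (i, j)).
Proof.
apply: (iffP forallP) => /= H t.
  move=> ht; have ti : t < j.+1 by nia.
  by have := H (Ordinal ti); rewrite /= ht.
by apply/implyP; apply: H.
Qed.

Lemma descE i j s : (i, j) \in Sk a b n k lam -> s.+1 * a <= j ->
  (i + s * b, j - s * a) \in lam -> (i + s.+1 * b, j - s.+1 * a) \notin lam ->
  (i + s * b, j - s * a) \in Es.
Proof.
rewrite inS /= => /andP[_ Hm] sj el sn.
rewrite /Es inF /= inS /= el.
have -> : i + s * b + b = i + s.+1 * b by rewrite mulSn; lia.
have -> : j - s * a - a = j - s.+1 * a by rewrite mulSn; lia.
rewrite sn andbT.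
have -> : a * (i + s * b) + b * (j - s * a) = a * i + b * j.
  move: sj; rewrite mulSn => h. nia.
rewrite Hm /=.
by rewrite mulSn in sj; lia.
Qed.

Lemma stepII i0 j0 : (i0, j0) \in Sk a b n k lam -> ~~ LG (i0, j0) -> ~~ RG (i0, j0) ->
  #|` Zs| < #|` Es|.
Proof.
move=> p0S /forallPn[[t1 _] /=]; rewrite negb_imply => /andP[t1i t1n].
move=> /forallPn[[s0 _] /=]; rewrite negb_imply => /andP[s0j s0n].
have p0S' := p0S; move: p0S'; rewrite inS /= => /andP[p0l Hm0].
pose P s := (s * a <= j0) && ((i0 + s * b, j0 - s * a) \notin lam).
have exP : exists s, P s by exists s0; rewrite /P s0j s0n.
case: (ex_minnP exP) => s; rewrite /P => /andP[sj sn] smin.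
case: s sj sn smin => [|s] sj sn smin.
  by rewrite !mul0n addn0 subn0 p0l in sn.
pose e0 := (i0 + s * b, j0 - s * a).
have e0E : e0 \in Es.
  apply: descE => //.
  have sj' : s * a <= j0 by rewrite mulSn in sj; lia.
  have : ~~ P s by apply/negP => /smin; rewrite ltnn.
  by rewrite /P sj' /= negbK.
pose phi := fun p : nat * nat => (p.1 %% b, p.2 + (p.1 %/ b) * a).
have sub : Zs `<=` phi @` (Es `\ e0).
  apply/fsubsetP => [[i j]]; rewrite /Zs inF /= => /andP[zS ib].
  have [t [tj tn]] := @notfull i j zS ib.
  pose Q t := (t * a <= j) && ((i + t * b, j - t * a) \notin lam).
  have exQ : exists t, Q t by exists t; rewrite /Q tj tn.
  case: (ex_minnP exQ) => {tj tn}t; rewrite /Q => /andP[tj tn] tmin.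
  have zl : (i, j) \in lam by move: zS; rewrite inS => /andP[].
  case: t tj tn tmin => [|t] tj tn tmin.
    by rewrite !mul0n addn0 subn0 zl in tn.
  have tj' : t * a <= j by rewrite mulSn in tj; lia.
  have el : (i + t * b, j - t * a) \in lam.
    have : ~~ Q t by apply/negP => /tmin; rewrite ltnn.
    by rewrite /Q tj' /= negbK.
  apply/imfsetP; exists (i + t * b, j - t * a).
    rewrite in_fsetD1 (@descE i j t zS tj el tn) andbT.
    apply/eqP => -[E1 E2].
    have h : (t1 + s) * b < t.+1 * b.
      rewrite mulnDl mulSn; move: t1i ib E1; clear; lia.
    rewrite ltn_pmul2r // ltnS in h.
    have [W tW] : exists W, t = W + t1 + s by exists (t - (t1 + s)); move: h; clear; lia.
    have Wa : W * a <= j.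
      apply: leq_trans tj'; rewrite leq_mul2r tW -addnA leq_addr orbT //.
    have : ~~ Q W.
      apply/negP => /tmin; rewrite tW; clear; lia.
    rewrite /Q Wa /= negbK.
    have sj' : s * a <= j0 by rewrite mulSn in sj; move: sj; clear; lia.
    have -> : (i + W * b, j - W * a) = (i0 - t1 * b, j0 + t1 * a).
      rewrite tW !mulnDl in E1 E2 tj'; congr pair; move: E1 E2 tj' sj'; clear; lia.
    by rewrite (negbTE t1n).
  rewrite /phi /=.
  rewrite addnC modnMDl divnMDl // (modn_small ib) (divn_small ib) addn0.
  congr pair; lia.
have := fsubset_leq_card sub.
have : #|` phi @` (Es `\ e0)| <= #|` Es `\ e0| by apply: leq_imfset_card.
rewrite (cardfsD1 e0 Es) e0E.
move=> h1 h2; rewrite add1n ltnS; exact: leq_trans h2 h1.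
Qed.

Lemma main_or p : p \in Sk a b n k lam -> LG p || RG p.
Proof.
case: p => i0 j0 pS; apply/negPn/negP; rewrite negb_or => /andP[nL nR].
have := @stepII i0 j0 pS nL nR; have := stepI; lia.
Qed.

Lemma mainL : exists A B : {fset (nat * nat)},
    [/\ A `&` B = fset0, A `|` B = Sk a b n k lam,
        (forall i j, (i, j) \in A -> i < b \/ (i - b, j + a) \in A) &
        (forall i j, (i, j) \in B -> j < a \/ (i + b, j - a) \in B)].
Proof.
exists [fset p in Sk a b n k lam | LG p], [fset p in Sk a b n k lam | RG p && ~~ LG p].
split.
- apply/fsetP => p; rewrite in_fsetI !inF in_fset0.
  by case: (LG p); rewrite ?andbF.
- apply/fsetP => p; rewrite in_fsetU !inF.
  move: (@main_or p); rewrite /Sk inF.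
  case: (_ && _) => //= /(_ isT).
  by case: (LG p); case: (RG p).
- move=> i j; rewrite inF => /andP[pS /LGP HL].
  case: (ltnP i b) => ib; [by left | right].
  rewrite inF; apply/andP; split.
    move: pS; rewrite !inS /= => /andP[_ Hm]; apply/andP; split.
      by have := HL 1; rewrite !mul1n; apply.
    have -> : a * (i - b) + b * (j + a) = a * i + b * j by nia.
    done.
  apply/LGP => t tb.
  have := HL t.+1; rewrite mulSn.
  have -> : i - (b + t * b) = i - b - t * b by lia.
  have -> : j + (a + t * a) = j + a + t * a by lia.
  apply; lia.
- move=> i j; rewrite inF => /andP[pS /andP[/RGP HR nL]].
  case: (ltnP j a) => ja; [by left | right].
  rewrite inF; apply/andP; split.
    move: pS; rewrite !inS /= => /andP[_ Hm]; apply/andP; split.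
      by have := HR 1; rewrite !mul1n; apply.
    have -> : a * (i + b) + b * (j - a) = a * i + b * j by nia.
    done.
  apply/andP; split.
    apply/RGP => t ta.
    have := HR t.+1; rewrite mulSn.
    have -> : i + (b + t * b) = i + b + t * b by lia.
    have -> : j - (a + t * a) = j - a - t * a by lia.
    apply; lia.
  apply: contra nL => /LGP HL; apply/LGP => t tb.
  have := HL t.+1; rewrite mulSn.
  have -> : i + b - (b + t * b) = i - t * b by lia.
  have -> : j - a + (a + t * a) = j + t * a by lia.
  apply; lia.
Qed.

End L.

Theorem lemma4p1 (a b r n : nat) (lam : {fset (nat * nat)}) (k : nat) :
  0 < a -> 0 < b -> coprime a b -> 1 <= r -> r * a * b < n ->
  is_partition lam -> #|` lam| = r * n -> balanced a b n r lam ->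
  r * a * b <= k -> k <= n - 1 ->
  (exists u v : nat, k = r * a * b + a * u + b * v) ->
  exists A B : {fset (nat * nat)},
    [/\ A `&` B = fset0, A `|` B = Sk a b n k lam,
        (forall i j, (i, j) \in A -> i < b \/ (i - b, j + a) \in A) &
        (forall i j, (i, j) \in B -> j < a \/ (i + b, j - a) \in B)].
Proof.
move=> a0 b0 cop r1 rn part _ bal klo khi [u [v kuv]].
exact: (@mainL a b r n k u v lam a0 b0 cop r1 rn part bal klo khi kuv).
Qed.
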